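(* Let $n\ge1$. (1) The number of plane trees with $n$ edges having exactly one old leaf is $2^{n-1}$. (2) The number of plane trees with $n$ edges having no young leaves is the Motzkin number $M_{n-1}$.
   Context: A plane tree is a rooted tree in which the children of each vertex are linearly ordered (left to right). A leaf is a vertex with no children; by convention the tree consisting of a single vertex (no edges) has no leaves. A leaf is an old leaf if it is the leftmost child of its parent, and a young leaf otherwise. The Motzkin number $M_m$ is the number of lattice paths from $(0,0)$ to $(m,0)$ with steps $(1,1),(1,-1),(1,0)$ never going below the $x$-axis; equivalently $M_m=\sum_{r}\binom{m}{2r}\frac{1}{r+1}\binom{2r}{r}$. *)

(* Defs.v *)
From mathcomp Require Import all_boot.
From Stdlib Require List.
Set Implicit Arguments. Unset Strict Implicit. Unset Printing Implicit Defensive.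

Inductive ptree : Type := Node of seq ptree.

Definition children (t : ptree) : seq ptree := let: Node ts := t in ts.

(* number of edges = number of non-root vertices *)
Fixpoint edges (t : ptree) : nat :=
  let: Node ts := t in sumn (map (fun c => (edges c).+1) ts).

Definition is_leaf_child (c : ptree) : bool := nilp (children c).

(* Leaves are non-root vertices with no children (so the one-vertex tree
   has no leaves).  An old leaf is a leaf that is the leftmost child of its
   parent; a young leaf is a leaf that is not the leftmost child. *)
Fixpoint old_leaves (t : ptree) : nat :=
  let: Node ts := t in
  (if ts is c :: _ then nat_of_bool (is_leaf_child c) else 0)
  + sumn (map old_leaves ts).

Fixpoint young_leaves (t : ptree) : nat :=
  let: Node ts := t in
  (if ts is _ :: r then count is_leaf_child r else 0)
  + sumn (map young_leaves ts).

Definition card_is (P : ptree -> Prop) (k : nat) : Prop :=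
  exists s : seq ptree,
    List.NoDup s /\ (forall t, List.In t s <-> P t) /\ size s = k.

Definition motzkin (m : nat) : nat :=
  \sum_(r < m.+1) 'C(m, 2 * r) * ('C(2 * r, r) %/ r.+1).

(* Main.v *)
Require Import Defs.
From mathcomp Require Import all_boot zify.
From Stdlib Require Import Lia.
From Stdlib Require List.
Set Implicit Arguments. Unset Strict Implicit. Unset Printing Implicit Defensive.
Open Scope seq_scope.

Lemma size_len {T} (s : seq T) : size s = List.length s.
Proof. by elim: s => //= x s ->. Qed.

Lemma InP_cat {T} (x : T) (s t : seq T) : List.In x (s ++ t) <-> List.In x s \/ List.In x t.
Proof. elim: s => [|y s IH] /=; first tauto. rewrite IH; tauto. Qed.

Lemma InP_map {A B} (f : A -> B) y (s : seq A) :
  List.In y (map f s) <-> exists x, List.In x s /\ y = f x.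
Proof.
elim: s => [|x s IH] /=; first by split=> // [[x []]].
rewrite IH; split.
- case=> [<-|[z [Hz ->]]]; [by exists x; auto | by exists z; auto].
- case=> z [[<-|Hz] ->]; [by left | right; exists z; auto].
Qed.

Lemma InP_flatten {T} (x : T) (ss : seq (seq T)) :
  List.In x (flatten ss) <-> exists s, List.In s ss /\ List.In x s.
Proof.
elim: ss => [|s ss IH] /=; first by split=> // [[s []]].
rewrite InP_cat IH; split.
- case=> [H|[t [Ht H]]]; [by exists s; auto | by exists t; auto].
- case=> t [[<-|Ht] H]; [by left | right; exists t; auto].
Qed.

Lemma InP_iota k a n : List.In k (iota a n) <-> a <= k < a + n.
Proof.
elim: n a => [|n IH] a /=; first by split=> //; lia.
rewrite IH; split; [case; lia | move=> H; case: (eqVneq a k) => [->|Hne]; [by left|right; lia]].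
Qed.

Lemma NoDup_cat {T} (s t : seq T) : List.NoDup s -> List.NoDup t ->
  (forall x, List.In x s -> List.In x t -> False) -> List.NoDup (s ++ t).
Proof.
elim: s => [|x s IH] //= Hs Ht Hd.
inversion Hs; subst; constructor.
- rewrite InP_cat => -[H|H]; [by [] | exact: (Hd x (or_introl erefl))].
- apply: IH => // y Hy; apply: Hd; by right.
Qed.

Lemma NoDup_map_inj {A B} (f : A -> B) (s : seq A) :
  (forall x y, List.In x s -> List.In y s -> f x = f y -> x = y) ->
  List.NoDup s -> List.NoDup (map f s).
Proof.
elim: s => [|x s IH] /= Hi Hs; first constructor.
inversion Hs; subst; constructor.
- rewrite InP_map => -[y [Hy E]]. have := Hi x y (or_introl erefl) (or_intror Hy) E.
  by move=> E'; subst.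
- apply: IH => // a b Ha Hb; apply: Hi; by right.
Qed.

Lemma NoDup_flatten_map {I T} (F : I -> seq T) (s : seq I) :
  List.NoDup s -> (forall i, List.In i s -> List.NoDup (F i)) ->
  (forall i j x, List.In i s -> List.In j s -> List.In x (F i) -> List.In x (F j) -> i = j) ->
  List.NoDup (flatten (map F s)).
Proof.
elim: s => [|i s IH] /= Hs HF Hd; first constructor.
inversion Hs; subst. apply: NoDup_cat.
- by apply: HF; left.
- apply: IH => // [j Hj|j k x Hj Hk]; [apply: HF; by right | apply: Hd; by right].
- move=> x Hx; rewrite InP_flatten => -[t [/InP_map [j [Hj ->]] Hxj]].
  have E := Hd i j x (or_introl erefl) (or_intror Hj) Hx Hxj. by subst.
Qed.

Lemma NoDup_iota a n : List.NoDup (iota a n).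
Proof.
elim: n a => [|n IH] a /=; constructor; last exact: IH.
rewrite InP_iota; lia.
Qed.

Definition pairs {A B C} (f : A -> B -> C) (s : seq A) (t : seq B) : seq C :=
  flatten (map (fun x => map (f x) t) s).

Lemma InP_pairs {A B C} (f : A -> B -> C) s t z :
  List.In z (pairs f s t) <-> exists x y, List.In x s /\ List.In y t /\ z = f x y.
Proof.
rewrite /pairs InP_flatten; split.
- case=> u [/InP_map [x [Hx ->]] /InP_map [y [Hy ->]]]; by exists x, y.
- case=> x [y [Hx [Hy ->]]]; exists (map (f x) t); split; apply/InP_map; eauto.
Qed.

Lemma size_pairs {A B C} (f : A -> B -> C) s t : size (pairs f s t) = size s * size t.
Proof. rewrite /pairs; elim: s => //= x s IH; by rewrite size_cat IH size_map. Qed.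

Lemma NoDup_pairs {A B C} (f : A -> B -> C) s t :
  List.NoDup s -> List.NoDup t ->
  (forall x y x' y', List.In x s -> List.In y t -> List.In x' s -> List.In y' t ->
     f x y = f x' y' -> x = x' /\ y = y') ->
  List.NoDup (pairs f s t).
Proof.
move=> Hs Ht Hi; rewrite /pairs; apply: NoDup_flatten_map => //.
- move=> x Hx; apply: NoDup_map_inj => // y y' Hy Hy' E.
  by case: (Hi x y x y' Hx Hy Hx Hy' E).
- move=> x x' z Hx Hx' /InP_map [y [Hy ->]] /InP_map [y' [Hy' E]].
  by case: (Hi x y x' y' Hx Hy Hx' Hy' E).
Qed.
Section MG.
Variables (T : Type) (b : T) (f1 : T -> T) (f2 : T -> T -> T).

Fixpoint mgen (fuel m : nat) : seq T :=
  match fuel with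
  | 0 => [::]
  | fuel'.+1 =>
    match m with
    | 0 => [:: b]
    | m'.+1 => map f1 (mgen fuel' m') ++
        flatten (map (fun a => pairs f2 (mgen fuel' a) (mgen fuel' (m'.-1 - a))) (iota 0 m'))
    end
  end.

Definition mg m := mgen m.+1 m.

Lemma mgen_stable f g m : m < f -> m < g -> mgen f m = mgen g m.
Proof.
elim: f g m => [|f IH] [|g] [|m] //= Hf Hg.
congr (map f1 _ ++ _); first by apply: IH; lia.
congr flatten; apply/eq_in_map => a; rewrite mem_iota => Ha.
by rewrite (IH g a) ?(IH g (m.-1 - a)) //; lia.
Qed.

Lemma mgenS f m : mgen f.+1 m.+1 = map f1 (mgen f m) ++
  flatten (map (fun a => pairs f2 (mgen f a) (mgen f (m.-1 - a))) (iota 0 m)).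
Proof. by []. Qed.

Lemma mg0 : mg 0 = [:: b]. Proof. by []. Qed.

Lemma mgS m : mg m.+1 = map f1 (mg m) ++
  flatten (map (fun a => pairs f2 (mg a) (mg (m.-1 - a))) (iota 0 m)).
Proof.
rewrite /mg mgenS; congr (_ ++ _).
congr flatten; apply/eq_in_map => a; rewrite mem_iota => Ha.
by rewrite (@mgen_stable m.+1 a.+1) ?(@mgen_stable m.+1 (m.-1 - a).+1) //; lia.
Qed.

Variable Q : nat -> T -> Prop.
Hypothesis Qb : Q 0 b.
Hypothesis Qf1 : forall m x, Q m x -> Q m.+1 (f1 x).
Hypothesis Qf2 : forall a c x y, Q a x -> Q c y -> Q (a + c + 2) (f2 x y).

Lemma mg_sound m x : List.In x (mg m) -> Q m x.
Proof.
elim/ltn_ind: m x => [[|m]] IH x.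
- by rewrite mg0 => -[<-|].
- rewrite mgS InP_cat => -[/InP_map [y [Hy ->]]|].
  + apply: Qf1; exact: (IH m).
  + move/InP_flatten => [s [/InP_map [a [/InP_iota Ha ->]]]] /InP_pairs [x1 [y1 [H1 [H2 ->]]]].
    have -> : m.+1 = a + (m.-1 - a) + 2 by lia.
    apply: Qf2; apply: IH => //; lia.
Qed.

Hypothesis Q0 : forall z, Q 0 z -> z = b.
Hypothesis QS : forall m z, Q m.+1 z ->
  (exists x, Q m x /\ z = f1 x) \/
  (exists a c x y, a + c + 1 = m /\ Q a x /\ Q c y /\ z = f2 x y).

Lemma mg_complete m z : Q m z -> List.In z (mg m).
Proof.
elim/ltn_ind: m z => [[|m]] IH z.
- by move/Q0 => ->; left.
- rewrite mgS InP_cat => /QS [[x [Hx ->]]|[a [c [x [y [E [Hx [Hy ->]]]]]]]].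
  + left; apply/InP_map; exists x; split=> //; apply: IH => //.
  + right; apply/InP_flatten; exists (pairs f2 (mg a) (mg (m.-1 - a))); split.
    * apply/InP_map; exists a; split=> //; apply/InP_iota; lia.
    * apply/InP_pairs; exists x, y; split; [apply: IH => //; lia|split=> //].
      have -> : m.-1 - a = c by lia. apply: IH => //; lia.
Qed.

Hypothesis Qfun : forall a a' x, Q a x -> Q a' x -> a = a'.
Hypothesis inj1 : forall m x x', Q m x -> Q m x' -> f1 x = f1 x' -> x = x'.
Hypothesis inj2 : forall a c a' c' x y x' y', Q a x -> Q c y -> Q a' x' -> Q c' y' ->
  f2 x y = f2 x' y' -> x = x' /\ y = y'.
Hypothesis disj : forall m a c z x y, Q m z -> Q a x -> Q c y -> f1 z <> f2 x y.

Lemma mg_NoDup m : List.NoDup (mg m).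
Proof.
elim/ltn_ind: m => [[|m]] IH.
- rewrite mg0; constructor => //; constructor.
- rewrite mgS; apply: NoDup_cat.
  + apply: NoDup_map_inj; last exact: IH.
    move=> x y Hx Hy; apply: inj1; apply: mg_sound; eassumption.
  + apply: NoDup_flatten_map; first exact: NoDup_iota.
    * move=> a /InP_iota Ha; apply: NoDup_pairs; try (apply: IH; lia).
      move=> x y x' y' Hx Hy Hx' Hy'; apply: inj2; apply: mg_sound; eassumption.
    * move=> i j z _ _ /InP_pairs [x [y [Hx [Hy ->]]]] /InP_pairs [x' [y' [Hx' [Hy' E]]]].
      have [E1 _] := inj2 (mg_sound Hx) (mg_sound Hy) (mg_sound Hx') (mg_sound Hy') E.
      subst x'; exact: Qfun (mg_sound Hx) (mg_sound Hx').
  + move=> z /InP_map [x [Hx ->]] /InP_flatten [s [/InP_map [a [_ ->]]]] /InP_pairs [x1 [y1 [H1 [H2 E]]]].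
    exact: disj (mg_sound Hx) (mg_sound H1) (mg_sound H2) E.
Qed.

End MG.

Lemma size_mg {A B} (a : A) g1 g2 (b : B) h1 h2 m :
  size (mg a g1 g2 m) = size (mg b h1 h2 m).
Proof.
elim/ltn_ind: m => [[|m]] IH //.
rewrite !mgS !size_cat !size_map !size_flatten /shape -!map_comp IH //.
congr (_ + sumn _); apply/eq_in_map => k; rewrite mem_iota => Hk /=.
by rewrite !size_pairs !IH //; lia.
Qed.
Definition leaf := Node [::].

Lemma edges_Node ts : edges (Node ts) = sumn (map (fun c => (edges c).+1) ts).
Proof. by []. Qed.

Lemma young_Node ts : young_leaves (Node ts) =
  (if ts is _ :: r then count is_leaf_child r else 0) + sumn (map young_leaves ts).
Proof. by []. Qed.

Lemma old_Node ts : old_leaves (Node ts) =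
  (if ts is c :: _ then nat_of_bool (is_leaf_child c) else 0) + sumn (map old_leaves ts).
Proof. by []. Qed.

Lemma edges_rcons ts c : edges (Node (rcons ts c)) = edges (Node ts) + (edges c).+1.
Proof. by rewrite !edges_Node -cats1 map_cat sumn_cat /= addn0. Qed.

Lemma young_rcons ts c : ts <> [::] ->
  young_leaves (Node (rcons ts c)) = young_leaves (Node ts) + is_leaf_child c + young_leaves c.
Proof.
case: ts => [//|t ts] _; rewrite rcons_cons !young_Node -cats1 /= count_cat map_cat sumn_cat /=.
lia.
Qed.

Lemma edges_pos t : children t <> [::] -> 0 < edges t.
Proof. by case: t => [[|c ts]] //= _; lia. Qed.

Lemma edges0 t : edges t = 0 -> t = leaf.
Proof. by case: t => [[|c ts]] //=; lia. Qed.

Lemma leafP t : is_leaf_child t = (edges t == 0).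
Proof. by case: t => [[|c ts]] //=; lia. Qed.

Definition QT m t := edges t = m.+1 /\ young_leaves t = 0.
Definition gb := Node [:: leaf].
Definition gf1 c := Node [:: c].
Definition gf2 t c := Node (rcons (children t) c).

Lemma QT_ch m t : QT m t -> children t <> [::].
Proof. by case: t => [[|c ts]] [] //=. Qed.

Lemma GT_Qb : QT 0 gb. Proof. by []. Qed.

Lemma GT_Qf1 m x : QT m x -> QT m.+1 (gf1 x).
Proof. by case=> E Y; split; rewrite /gf1 /= ?E ?Y //; lia. Qed.

Lemma GT_Qf2 a c x y : QT a x -> QT c y -> QT (a + c + 2) (gf2 x y).
Proof.
move=> Hx Hy; have Hc := QT_ch Hx; case: Hx Hy => Ex Yx [Ey Yy].
case: x Hc Ex Yx => ts Hc Ex Yx; rewrite /gf2 /=; split.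
- rewrite edges_rcons Ex Ey; lia.
- by rewrite young_rcons // Yx Yy leafP Ey.
Qed.

Lemma GT_Q0 z : QT 0 z -> z = gb.
Proof.
case: z => ts [E _]; case/lastP: ts E => [//|ts c].
rewrite edges_rcons; case: ts => [|t ts] /=.
- by move=> E; rewrite (edges0 (t := c)) //; lia.
- lia.
Qed.

Lemma GT_QS m z : QT m.+1 z ->
  (exists x, QT m x /\ z = gf1 x) \/
  (exists a c x y, a + c + 1 = m /\ QT a x /\ QT c y /\ z = gf2 x y).
Proof.
case: z => ts [E Y]; case/lastP: ts E Y => [//|ts c].
case: ts => [|t ts] E Y.
- left; exists c; split=> //; split.
  + by move: E; rewrite edges_rcons /=; lia.
  + by move: Y; rewrite young_Node /=; lia.
- right; rewrite young_rcons // in Y; rewrite edges_rcons in E.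
  have Hc : edges c <> 0 by move=> H; move: Y; rewrite leafP H; lia.
  have Ht : 0 < edges (Node (t :: ts)) by apply: edges_pos.
  exists (edges (Node (t :: ts))).-1, (edges c).-1, (Node (t :: ts)), c; split; first lia.
  split; [split; lia | split; [split; lia | by []]].
Qed.

Lemma GT_Qfun a a' x : QT a x -> QT a' x -> a = a'.
Proof. by case=> E _ [E' _]; lia. Qed.

Lemma GT_inj1 m x x' : QT m x -> QT m x' -> gf1 x = gf1 x' -> x = x'.
Proof. by move=> _ _ [->]. Qed.

Lemma GT_inj2 a c a' c' x y x' y' : QT a x -> QT c y -> QT a' x' -> QT c' y' ->
  gf2 x y = gf2 x' y' -> x = x' /\ y = y'.
Proof.
move=> _ _ _ _ [] /rcons_inj [E ->]; split=> //.
by case: x x' E => ts [ts'] /= ->.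
Qed.

Lemma GT_disj m a c z x y : QT m z -> QT a x -> QT c y -> gf1 z <> gf2 x y.
Proof.
move=> _ Hx _; have := QT_ch Hx; rewrite /gf1 /gf2 => H [] /(congr1 size).
rewrite size_rcons; case: (children x) H => //.
Qed.

Definition GT m := mg gb gf1 gf2 m.

Lemma GT_char m t : List.In t (GT m) <-> QT m t.
Proof.
split; [apply: mg_sound; [exact: GT_Qb|exact: GT_Qf1|exact: GT_Qf2]
       |apply: mg_complete; [exact: GT_Q0|exact: GT_QS]].
Qed.

Lemma GT_NoDup m : List.NoDup (GT m).
Proof.
apply: (@mg_NoDup _ _ _ _ QT); [exact: GT_Qb|exact: GT_Qf1|exact: GT_Qf2|exact: GT_Qfun
  |exact: GT_inj1|exact: GT_inj2|exact: GT_disj].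
Qed.
Inductive step := SF | SU | SD.

Fixpoint run (h : nat) (w : seq step) : option nat :=
  match w with
  | [::] => Some h
  | SF :: w' => run h w'
  | SU :: w' => run h.+1 w'
  | SD :: w' => if h is h'.+1 then run h' w' else None
  end.

Lemma run_cat h a b : run h (a ++ b) = if run h a is Some j then run j b else None.
Proof. by elim: a h => [|[] a IH] [|h] //=. Qed.

Lemma run_shift h k j w : run h w = Some k -> run (h + j) w = Some (k + j).
Proof.
elim: w h => [|[] w IH] h /=; [by case=> -> | exact: IH | exact: IH |].
by case: h => // h; apply: IH.
Qed.

Lemma run_split n : forall w h k, size w <= n -> run h w = Some k -> k < h ->
  exists w1 w2, w = w1 ++ SD :: w2 /\ run 0 w1 = Some 0 /\ run h.-1 w2 = Some k.
Proof.
elim: n => [|n IHn] w h k.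
  by case: w => // _ [<-]; lia.
case: w => [|x w] Hs; first by move=> [<-]; lia.
have {}Hs : size w <= n by [].
case: x => /=.
- move=> R Hk; have [w1 [w2 [-> [R1 R2]]]] := IHn w h k Hs R Hk.
  by exists (SF :: w1), w2.
- move=> R Hk; have [w1 [w2 [E [R1 R2]]]] := IHn w h.+1 k Hs R (ltn_trans Hk (ltnSn h)).
  have Hs2 : size w2 <= n by move: Hs; rewrite E size_cat /=; lia.
  have [v1 [v2 [E2 [R3 R4]]]] := IHn w2 h k Hs2 R2 Hk.
  exists (SU :: w1 ++ SD :: v1), v2; split; first by rewrite E E2 /= -catA.
  split=> //=. rewrite run_cat (run_shift 1 R1) /=. done.
- case: h => // h R _; by exists [::], w.
Qed.

Lemma cat_cons_lt {T} (a b c d : seq T) x y : a ++ x :: b = c ++ y :: d -> size a < size c ->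
  c = a ++ x :: drop (size a).+1 c.
Proof.
elim: a c => [|z a IH] [|u c] //= E H.
- by case: E => -> _; rewrite drop0.
- case: E => -> E; congr cons; apply: IH => //.
Qed.

Lemma cat_cons_eq {T} (a b c d : seq T) x y : a ++ x :: b = c ++ y :: d -> size a = size c ->
  a = c /\ b = d.
Proof.
elim: a c => [|z a IH] [|u c] //= E H.
- by case: E.
- case: E => -> E; case: (IH c E) => //; [lia | by move=> -> ->].
Qed.

Lemma first_return_uniq w1 w2 v1 v2 : w1 ++ SD :: w2 = v1 ++ SD :: v2 ->
  run 0 w1 = Some 0 -> run 0 v1 = Some 0 -> w1 = v1 /\ w2 = v2.
Proof.
move=> E R1 R2.
case: (ltngtP (size w1) (size v1)) => H.
- have E' := cat_cons_lt E H. by move: R2; rewrite E' run_cat R1.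
- have E' := cat_cons_lt (esym E) H. by move: R1; rewrite E' run_cat R2.
- exact: cat_cons_eq E H.
Qed.

Definition QW m w := size w = m /\ run 0 w = Some 0.
Definition wb : seq step := [::].
Definition wf1 (w : seq step) := SF :: w.
Definition wf2 (w1 w2 : seq step) := SU :: w1 ++ SD :: w2.

Lemma W_Qb : QW 0 wb. Proof. by []. Qed.
Lemma W_Qf1 m x : QW m x -> QW m.+1 (wf1 x).
Proof. by case=> E R; split=> //=; rewrite E. Qed.
Lemma W_Qf2 a c x y : QW a x -> QW c y -> QW (a + c + 2) (wf2 x y).
Proof.
case=> Ex Rx [Ey Ry]; split; first by rewrite /= size_cat /= Ex Ey; lia.
by rewrite /= run_cat (run_shift 1 Rx) /=.
Qed.
Lemma W_Q0 z : QW 0 z -> z = wb.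
Proof. by case: z => [|x z] [] //. Qed.
Lemma W_QS m z : QW m.+1 z ->
  (exists x, QW m x /\ z = wf1 x) \/
  (exists a c x y, a + c + 1 = m /\ QW a x /\ QW c y /\ z = wf2 x y).
Proof.
case: z => [|[] z] [E R] //=.
- by left; exists z; split => //; split; [case: E|].
- right; have [w1 [w2 [Ez [R1 R2]]]] := run_split (leqnn (size z)) R (ltnSn 0).
  subst z; exists (size w1), (size w2), w1, w2; split.
    by move: E => /=; rewrite size_cat /=; lia.
  by [].
Qed.
Lemma W_Qfun a a' x : QW a x -> QW a' x -> a = a'.
Proof. by case=> E _ [E' _]; lia. Qed.
Lemma W_inj1 m x x' : QW m x -> QW m x' -> wf1 x = wf1 x' -> x = x'.
Proof. by move=> _ _ [->]. Qed.
Lemma W_inj2 a c a' c' x y x' y' : QW a x -> QW c y -> QW a' x' -> QW c' y' ->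
  wf2 x y = wf2 x' y' -> x = x' /\ y = y'.
Proof. move=> [_ R1] _ [_ R2] _ [] E; exact: first_return_uniq E R1 R2. Qed.
Lemma W_disj m a c z x y : QW m z -> QW a x -> QW c y -> wf1 z <> wf2 x y.
Proof. by []. Qed.

Definition BW m := mg wb wf1 wf2 m.

Lemma BW_char m t : List.In t (BW m) <-> QW m t.
Proof.
split; [apply: mg_sound; [exact: W_Qb|exact: W_Qf1|exact: W_Qf2]
       |apply: mg_complete; [exact: W_Q0|exact: W_QS]].
Qed.

Lemma BW_NoDup m : List.NoDup (BW m).
Proof.
apply: (@mg_NoDup _ _ _ _ QW); [exact: W_Qb|exact: W_Qf1|exact: W_Qf2|exact: W_Qfun
  |exact: W_inj1|exact: W_inj2|exact: W_disj].
Qed.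
Definition isU (x : step) : bool := if x is SU then true else false.
Definition cntU (w : seq step) := count isU w.

Fixpoint vw (m h u : nat) : seq (seq step) :=
  match m with
  | 0 => if (h == 0) && (u == 0) then [:: [::]] else [::]
  | m'.+1 => map (cons SF) (vw m' h u) ++
      ((if u is u'.+1 then map (cons SU) (vw m' h.+1 u') else [::]) ++
       (if h is h'.+1 then map (cons SD) (vw m' h' u) else [::]))
  end.

Lemma vw_char m : forall h u w, List.In w (vw m h u) <-> size w = m /\ run h w = Some 0 /\ cntU w = u.
Proof.
elim: m => [|m IH] h u w /=.
- split.
  + case: ifP => H; last by [].
    by move: H => /andP [/eqP -> /eqP ->] [<- | []].
  + case: w => [|x w] [E [R C]] //=.
    by case: R => ->; rewrite -C; left.
- rewrite !InP_cat; split.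
  + case=> [/InP_map [x [/IH [E [R C]] ->]]|[]]; first by rewrite /= E R.
    * case: u IH => // u IH /InP_map [x [/IH [E [R C]] ->]]; move: C; rewrite /cntU => C; by rewrite /= E R C.
    * case: h IH => // h IH /InP_map [x [/IH [E [R C]] ->]]; by rewrite /= E R.
  + case: w => [|[] w] [//= [E]] /=.
    * move=> [R C]; left; apply/InP_map; exists w; split=> //; exact/IH.
    * case: u => [|u] [R C]; first by move: C; rewrite /cntU /=; lia.
      have {}C : cntU w = u by move: C; rewrite /cntU /=; lia. right; left; apply/InP_map; exists w; split=> //; exact/IH.
    * case: h => [|h] [R C]; first by case: R.
      right; right; apply/InP_map; exists w; split=> //; exact/IH.
Qed.

Lemma vw_NoDup m h u : List.NoDup (vw m h u).
Proof.
elim: m h u => [|m IH] h u /=.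
- by case: ifP => _; repeat constructor.
- have Hm : forall x, List.NoDup (map (cons x) (vw m h u)).
    by move=> x; apply: NoDup_map_inj => // a b _ _ [].
  apply: NoDup_cat; first exact: Hm.
  all: clear Hm.
  + apply: NoDup_cat.
    * case: u => [|u]; [constructor | apply: NoDup_map_inj => // a b _ _ [] //].
    * case: h => [|h]; [constructor | apply: NoDup_map_inj => // a b _ _ [] //].
    * case: u => [|u] //; case: h => [|h] // x /InP_map [a [_ ->]] /InP_map [b [_ E]] //.
  + move=> x /InP_map [a [_ ->]] /InP_cat [].
    * by case: u => // u /InP_map [b [_ E]].
    * by case: h => // h /InP_map [b [_ E]].
Qed.

Lemma vwS m h u : size (vw m.+1 h u) = size (vw m h u) +
  (if u is u'.+1 then size (vw m h.+1 u') else 0) + (if h is h'.+1 then size (vw m h' u) else 0).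
Proof. rewrite /= !size_cat size_map addnA; by case: u => [|u]; case: h => [|h]; rewrite /= ?size_map ?addn0. Qed.

Arguments vw : simpl never.

Lemma vw_small m h u : m < u.*2 + h -> size (vw m h u) = 0.
Proof.
elim: m h u => [|m IH] h u H.
- by case: h u H => [|h] [|u].
- rewrite vwS IH; last lia.
  case: u H => [|u] H; case: h H => [|h] H /=; rewrite ?IH //; lia.
Qed.

Definition beta h u := size (vw (u.*2 + h) h u).

Lemma beta00 : beta 0 0 = 1. Proof. by []. Qed.

Lemma beta_rec h u : 0 < u.*2 + h -> beta h u =
  (if u is u'.+1 then beta h.+1 u' else 0) + (if h is h'.+1 then beta h' u else 0).
Proof.
move=> H; rewrite /beta.
have [k Ek] : exists k, u.*2 + h = k.+1 by exists (u.*2 + h).-1; lia.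
rewrite Ek vwS vw_small; last lia.
case: u Ek {H} => [|u] Ek; case: h Ek => [|h] Ek //=.
- by have -> : k = 0.*2 + h by lia.
- by have -> : k = u.*2 + 1 by lia.
- have -> : u.*2 + h.+2 = k by lia. by have -> : u.+1.*2 + h = k by lia.
Qed.

Lemma vw_size m : forall h u, size (vw m h u) = 'C(m, u.*2 + h) * beta h u.
Proof.
elim: m => [|m IH] h u.
- rewrite bin0n; case: h => [|h]; case: u => [|u] //=; by rewrite mul0n.
- rewrite vwS !IH.
  case: (posnP (u.*2 + h)) => Hk.
  + have [-> ->] : u = 0 /\ h = 0 by lia. by rewrite /= !bin0.
  + rewrite (beta_rec Hk).
    have [k Ek] : exists k, u.*2 + h = k.+1 by exists (u.*2 + h).-1; lia.
    rewrite Ek binS.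
    case: u Ek {Hk} => [|u] Ek; case: h Ek => [|h] Ek /=; rewrite ?IH; try (move: Ek; lia).
    * have -> : 0.*2 + h = k by lia. nia.
    * have -> : u.*2 + 1 = k by lia. nia.
    * have -> : u.*2 + h.+2 = k by lia. have -> : u.+1.*2 + h = k by lia. nia.
Qed.

Lemma beta_h0 h : beta h 0 = 1.
Proof. elim: h => [//|h IH]; by rewrite beta_rec. Qed.

Lemma ballot n : forall h u, u.*2 + h <= n ->
  beta h u.+1 + 'C(u.+1.*2 + h, u) = 'C(u.+1.*2 + h, u.+1).
Proof.
elim: n => [|n IHn] h u Hn.
- have [-> ->] : u = 0 /\ h = 0 by lia.
  by rewrite (beta_rec (u := 1) (h := 0)) //= beta_h0.
- have Ek : u.+1.*2 + h = (u.*2 + h.+1).+1 by lia.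
  rewrite Ek (beta_rec (h := h) (u := u.+1)); last lia.
  have [X [Fa HC2]] : exists X, beta h.+1 u + X = 'C(u.*2 + h.+1, u) /\ 'C((u.*2 + h.+1).+1, u) = 'C(u.*2 + h.+1, u) + X.
    case: u Ek Hn => [|u0] Ek Hn.
    + by exists 0; rewrite beta_h0 !bin0.
    + exists 'C(u0.+1.*2 + h.+1, u0); split; last by rewrite binS.
      exact: IHn h.+1 u0 ltac:(lia).
  have HC1 := binS (u.*2 + h.+1) u.
  case: h Ek Hn Fa HC2 HC1 => [|h] Ek Hn Fa HC2 HC1 /=.
  + have Hs : 'C(u.*2 + 1, u.+1) = 'C(u.*2 + 1, u).
      rewrite -(bin_sub (n := u.*2 + 1) (m := u)); last lia.
      by have -> : u.*2 + 1 - u = u.+1 by lia.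
    lia.
  + have Hb := IHn h u ltac:(lia).
    have E2 : u.+1.*2 + h = u.*2 + h.+2 by lia.
    rewrite E2 in Hb. lia.
Qed.
Lemma catalan r : beta 0 r = 'C(r.*2, r) %/ r.+1.
Proof.
case: r => [//|r].
have B := ballot (leqnn (r.*2 + 0)); rewrite addn0 in B.
have M := mul_bin_left (r.+1.*2) r.
have E : r.+1.*2 - r = r.+2 by lia.
rewrite E in M.
have -> : 'C(r.+1.*2, r.+1) = r.+2 * beta 0 r.+1 by nia.
by rewrite mulKn.
Qed.

Definition AW m := flatten (map (fun u => vw m 0 u) (iota 0 m.+1)).

Lemma AW_char m w : List.In w (AW m) <-> QW m w.
Proof.
rewrite /AW InP_flatten; split.
- case=> s [/InP_map [u [_ ->]]] /vw_char [E [R _]]; by split.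
- case=> E R; exists (vw m 0 (cntU w)); split.
  + apply/InP_map; exists (cntU w); split=> //; apply/InP_iota.
    have := count_size isU w; rewrite /cntU; lia.
  + by apply/vw_char.
Qed.

Lemma AW_NoDup m : List.NoDup (AW m).
Proof.
apply: NoDup_flatten_map; first exact: NoDup_iota.
- move=> u _; exact: vw_NoDup.
- by move=> i j x _ _ /vw_char [_ [_ <-]] /vw_char [_ [_ <-]].
Qed.

Lemma sumn_iota (F : nat -> nat) n : sumn (map F (iota 0 n)) = \sum_(r < n) F r.
Proof.
elim: n => [|n IH]; first by rewrite big_ord0.
have -> : iota 0 n.+1 = iota 0 n ++ [:: n] by rewrite -addn1 iotaD.
by rewrite map_cat sumn_cat IH big_ord_recr /= addn0.
Qed.

Lemma size_AW m : size (AW m) = motzkin m.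
Proof.
rewrite /AW size_flatten /shape -map_comp sumn_iota /motzkin.
apply: eq_bigr => r _ /=; by rewrite vw_size catalan addn0 mul2n.
Qed.

Lemma NoDup_same_size {T} (s t : seq T) : List.NoDup s -> List.NoDup t ->
  (forall x, List.In x s <-> List.In x t) -> size s = size t.
Proof.
move=> Hs Ht H; rewrite !size_len; apply/eqP; rewrite eqn_leq; apply/andP; split; apply/leP;
  apply: List.NoDup_incl_length => // x; rewrite H //.
Qed.

Lemma size_GT m : size (GT m) = motzkin m.
Proof.
rewrite /GT (size_mg _ _ _ wb wf1 wf2) -size_AW.
apply: NoDup_same_size; [exact: BW_NoDup | exact: AW_NoDup |].
move=> x; rewrite BW_char AW_char //.
Qed.
Definition star j := Node (nseq j leaf).
Definition mk m k c := Node (c :: nseq (m.-1 - k) leaf).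

Fixpoint OTf (fuel m : nat) : seq ptree :=
  match fuel with
  | 0 => [::]
  | f.+1 => star m.+1 :: flatten (map (fun k => map (mk m k) (OTf f k)) (iota 0 m))
  end.

Definition OT m := OTf m.+1 m.

Lemma OTf_stable f g m : m < f -> m < g -> OTf f m = OTf g m.
Proof.
elim: f g m => [|f IH] [|g] m //= Hf Hg.
congr (_ :: flatten _); apply/eq_in_map => a; rewrite mem_iota => Ha.
by rewrite (IH g a) //; lia.
Qed.

Lemma OT_eq m : OT m = star m.+1 :: flatten (map (fun k => map (mk m k) (OT k)) (iota 0 m)).
Proof.
rewrite /OT /=; congr (_ :: flatten _); apply/eq_in_map => a; rewrite mem_iota => Ha.
by rewrite (@OTf_stable m a.+1) //; lia.
Qed.

Arguments OT : simpl never.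

Lemma edges_nseq j : edges (Node (nseq j leaf)) = j.
Proof. by rewrite edges_Node map_nseq sumn_nseq mul1n. Qed.

Lemma edges_mk m k c : edges (mk m k c) = (edges c).+1 + (m.-1 - k).
Proof. by rewrite /mk edges_Node /= -edges_Node edges_nseq. Qed.

Lemma old_nseq j : sumn (map old_leaves (nseq j leaf)) = 0.
Proof. by rewrite map_nseq sumn_nseq. Qed.

Lemma old_star j : old_leaves (star j.+1) = 1.
Proof. by rewrite /star old_Node /= old_nseq. Qed.

Lemma old_mk m k c : old_leaves (mk m k c) = is_leaf_child c + old_leaves c.
Proof. by rewrite /mk old_Node /= old_nseq addn0. Qed.

Lemma old_pos n : forall t, edges t <= n -> children t <> [::] -> 0 < old_leaves t.
Proof.
elim: n => [|n IH] [[|c r]] //= He _.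
case: c He => [[|c0 r0]] He /=; first lia.
have : 0 < old_leaves (Node (c0 :: r0)) by apply: IH => //; move: He => /=; lia.
rewrite old_Node /=; lia.
Qed.

Lemma old0 t : old_leaves t = 0 -> t = leaf.
Proof.
case: t => [[|c r]] H //.
have P := @old_pos (edges (Node (c :: r))) (Node (c :: r)) (leqnn _) (fun E => ltac:(discriminate E)).
by rewrite H in P.
Qed.

Lemma sum_old0 r : sumn (map old_leaves r) = 0 -> r = nseq (size r) leaf.
Proof.
elim: r => [//|x r IH] /= H.
have Hx : old_leaves x = 0 by lia.
have Hr : sumn (map old_leaves r) = 0 by lia.
by rewrite (old0 Hx) {1}(IH Hr).
Qed.

Definition QO m t := edges t = m.+1 /\ old_leaves t = 1.

Lemma OT_sound m t : List.In t (OT m) -> QO m t.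
Proof.
elim/ltn_ind: m t => m IH t; rewrite OT_eq => -[<-|].
- by split; [rewrite /star edges_nseq | rewrite old_star].
- move/InP_flatten => [s [/InP_map [k [/InP_iota Hk ->]]]] /InP_map [c [Hc ->]].
  have [Ec Oc] := IH k ltac:(lia) c Hc.
  split; first by rewrite edges_mk Ec; lia.
  by rewrite old_mk Oc leafP Ec.
Qed.

Lemma OT_complete m t : QO m t -> List.In t (OT m).
Proof.
elim/ltn_ind: m t => m IH [[|c r]] [E O] //.
rewrite OT_eq; move: O; rewrite old_Node /= => O.
move: E; rewrite edges_Node /= -/(edges (Node r)) => E.
case: (boolP (is_leaf_child c)) => Hc.
- left. have Hc0 : c = leaf by case: c Hc {O E} => [[]].
  subst c. have Hr : r = nseq (size r) leaf by apply: sum_old0; move: O => /=; lia.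
  have Es : size r = m by move: E; rewrite {1}Hr edges_nseq /=; lia.
  by rewrite /star {1}Hr Es.
- right. rewrite /= in O.
  have Pc : 0 < old_leaves c.
    apply: (@old_pos (edges c)) => //; by case: c Hc {O E} => [[]].
  have Oc : old_leaves c = 1 by lia.
  have Hr : r = nseq (size r) leaf by apply: sum_old0; lia.
  have Es : edges c + size r = m by move: E; rewrite {1}Hr edges_nseq /=; lia.
  have Ec : edges c <> 0 by move=> H; move: Hc; rewrite leafP H.
  apply/InP_flatten; exists (map (mk m (edges c).-1) (OT (edges c).-1)); split.
  + apply/InP_map; exists (edges c).-1; split=> //; apply/InP_iota; lia.
  + apply/InP_map; exists c; split.
    * apply: IH; [lia | split=> //; lia].
    * rewrite /mk {1}Hr; congr (Node (_ :: nseq _ _)); lia.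
Qed.

Lemma OT_NoDup m : List.NoDup (OT m).
Proof.
elim/ltn_ind: m => m IH; rewrite OT_eq; constructor.
- move/InP_flatten => [s [/InP_map [k [/InP_iota Hk ->]]]] /InP_map [c [Hc E]].
  have [Ec _] := OT_sound Hc. case: E => Ec'. by rewrite -Ec' /= in Ec.
- apply: NoDup_flatten_map; first exact: NoDup_iota.
  + move=> k /InP_iota Hk; apply: NoDup_map_inj; last by apply: IH; lia.
    by move=> x y _ _ [].
  + move=> i j x _ _ /InP_map [c [Hc ->]] /InP_map [c' [Hc' [E _]]].
    have [Ec _] := OT_sound Hc; have [Ec' _] := OT_sound Hc'. subst c'; lia.
Qed.

Lemma size_OT m : size (OT m) = 2 ^ m.
Proof.
elim/ltn_ind: m => m IH; rewrite (OT_eq m) /= size_flatten /shape -map_comp.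
have -> : map (size \o (fun k => map (mk m k) (OT k))) (iota 0 m) = map (fun k => 2 ^ k) (iota 0 m).
  apply/eq_in_map => k; rewrite mem_iota => Hk; rewrite [LHS]/comp size_map IH //; lia.
rewrite sumn_iota; elim: m {IH} => [|m IHm]; first by rewrite big_ord0.
by rewrite big_ord_recr /= -addSn IHm expnS mul2n addnn.
Qed.

Theorem mainTheorem5 (n : nat) (hn : 1 <= n) :
  card_is (fun t => edges t = n /\ old_leaves t = 1) (2 ^ n.-1)
  /\ card_is (fun t => edges t = n /\ young_leaves t = 0) (motzkin n.-1).
Proof.
case: n hn => [//|m] _ /=; split.
- exists (OT m); split; first exact: OT_NoDup.
  split; last exact: size_OT.
  move=> t; split; [exact: OT_sound | exact: OT_complete].
- exists (GT m); split; first exact: GT_NoDup.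
  split; last exact: size_GT.
  move=> t; exact: GT_char.
Qed.
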